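(* Let $m\ge0$, $r>0$ and $\gamma>0$. If $r\le\sqrt{2/(\gamma m)}$, then for all $0\le\tau<\pi mr/4$, all $d\ge0$ and all $\omega>0$, $$\mathrm{Re}\left((\pi+6j)\left(1+\frac{\gamma}{j\omega\big(mj\omega+d+\tfrac1r e^{-j\omega\tau}\big)}\right)\right)>0.$$
   Context: $j$ denotes the imaginary unit. *)

(* Defs.v *)
From Stdlib Require Export Reals.
Open Scope R_scope.

Definition C : Type := (R * R)%type.
Definition Re (z : C) : R := fst z.
Definition Im (z : C) : R := snd z.
Definition RtoC (x : R) : C := (x, 0).
Definition Cj : C := (0, 1).
Definition Cadd (z w : C) : C := (fst z + fst w, snd z + snd w).
Definition Cmul (z w : C) : C :=
  (fst z * fst w - snd z * snd w, fst z * snd w + snd z * fst w).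
Definition Cinv (z : C) : C :=
  (fst z / (fst z ^ 2 + snd z ^ 2), - snd z / (fst z ^ 2 + snd z ^ 2)).
Definition Cdiv (z w : C) : C := Cmul z (Cinv w).
Definition Cexpj (t : R) : C := (cos t, sin t).

Definition denom (m d r tau w : R) : C :=
  Cmul (Cmul Cj (RtoC w))
       (Cadd (Cadd (Cmul (RtoC m) (Cmul Cj (RtoC w))) (RtoC d))
             (Cmul (RtoC (1 / r)) (Cexpj (- (w * tau))))).

Definition expr7 (m d r gamma tau w : R) : C :=
  Cmul (PI, 6) (Cadd (RtoC 1) (Cdiv (RtoC gamma) (denom m d r tau w))).

(* Main.v *)
Require Import Defs.
From Stdlib Require Import Reals Lra Psatz.
Open Scope R_scope.
Lemma sin_lb_poly a : 0 <= a -> a <= PI -> a - a^3/6 <= sin a.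
Proof. intros h1 h2. destruct (sin_bound a 0 h1 h2) as [Hs _].
 unfold sin_approx, sin_term in Hs. simpl in Hs. lra. Qed.
Lemma sin_ub_poly a : 0 <= a -> sin a <= a.
Proof. intros h1. destruct (Rle_lt_dec a 1).
 - pose proof PI_4. pose proof PI2_1. destruct (sin_bound a 0 h1 ltac:(lra)) as [_ Hs].
 unfold sin_approx, sin_term in Hs. simpl in Hs.
 assert (0<=a^3) by (apply pow_le; lra).
 assert (a^5 <= a^3) by (assert (a^5 = a^3*a^2) by ring; assert (a^2<=1) by nra; nra).
 lra.
 - pose proof (SIN_bound a). lra. Qed.
Lemma cos_ub_poly a : - PI/2 <= a -> a <= PI/2 -> cos a <= 1 - a^2/2 + a^4/24.
Proof. intros h1 h2. destruct (cos_bound a 0 h1 h2) as [_ Hs].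
 unfold cos_approx, cos_term in Hs. simpl in Hs. lra. Qed.
Lemma cos_lb_poly a : - PI/2 <= a -> a <= PI/2 -> 1 - a^2/2 <= cos a.
Proof. intros h1 h2. destruct (cos_bound a 0 h1 h2) as [Hs _].
 unfold cos_approx, cos_term in Hs. simpl in Hs. lra. Qed.

Lemma PI_bounds : 3 < PI <= 4.
Proof. pose proof PI_4. pose proof PI2_3_2. lra. Qed.

Lemma H_pos k t : 0 < k -> 0 <= t -> t < PI/2 -> 4*t < PI*k ->
  0 < PI*(k^2-1)*(k-2*sin t) + 12*cos t.
Proof.
  intros hk ht1 ht2 hkt. pose proof PI_bounds.
  assert (hs0 : 0 <= sin t) by (apply sin_ge_0; lra).
  assert (hc0 : 0 < cos t) by (apply cos_gt_0; lra).
  destruct (Rle_lt_dec k 1) as [hk1|hk1].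
  - assert (t < 1) by nra.
    assert (1 - t^2/2 <= cos t) by (apply cos_lb_poly; lra).
    assert (0 <= 2*sin t*(1-k^2)) by (apply Rmult_le_pos; nra).
    assert ((k^2-1)*k >= -1) by nra.
    assert ((k^2-1)*(k-2*sin t) >= -1) by nra.
    assert (PI*((k^2-1)*(k-2*sin t)) >= - PI) by nra.
    nra.
  - destruct (Rle_lt_dec (2*sin t) k) as [hks|hks].
    + assert (0 <= (k^2-1)*(k-2*sin t)) by (apply Rmult_le_pos; nra).
      assert (0 <= PI*((k^2-1)*(k-2*sin t))) by (apply Rmult_le_pos; lra). rewrite Rmult_assoc; lra.
    + set (u := PI/2 - t).
      assert (hs : sin t = cos u) by (unfold u; rewrite cos_shift; reflexivity).
      assert (hc : cos t = sin u) by (unfold u; rewrite sin_shift; reflexivity).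
      rewrite hs, hc in *.
      assert (hu0 : 0 < u) by (unfold u; lra).
      assert (hu1 : u <= PI/2) by (unfold u; lra).
      assert (hcu : cos u <= 1 - u^2/2 + u^4/24) by (apply cos_ub_poly; lra).
      assert (hsu : u - u^3/6 <= sin u) by (apply sin_lb_poly; lra).
      assert (hcu1 : cos u <= 1) by (pose proof (COS_bound u); lra).
      assert (hk2 : k < 2) by lra.
      assert (hkt' : PI*(k-2) > -4*u) by (unfold u in *; lra).
      set (X := k^2-1).
      assert (hX : 0 < X < 3) by (unfold X; nra).
      set (Y := -4*u + PI*(u^2 - u^4/12)).
      assert (PX : 0 < PI*X) by nra.
      assert (h1 : PI*X*(k-2*cos u) >= PI*X*(k-2+u^2-u^4/12)) by (apply Rmult_ge_compat_l; lra).
      assert (h2e : PI*X*(k-2+u^2-u^4/12) - X*Y = X*(PI*(k-2)+4*u)) by (unfold Y; ring).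
      assert (h2 : PI*X*(k-2+u^2-u^4/12) >= X*Y) by nra.
      assert (hu2 : u^2 <= 4) by nra.
      destruct (Rle_lt_dec 0 Y).
      * assert (0 <= X*Y) by nra. nra.
      * assert (X*Y >= 3*Y) by nra.
        assert (3*Y + 12*u - 2*u^3 = u^2*(3*PI*(1-u^2/12) - 2*u)) by (unfold Y; field).
        assert (0 < 3*PI*(1-u^2/12) - 2*u) by nra.
        assert (0 < u^2) by nra.
        nra.
Qed.

Lemma Q_pos k t e : 0 < k -> 0 <= t -> 4*t < PI*k -> cos t <= e ->
  0 < k*PI*((k - sin t)^2 + e^2) - 2*PI*(k - sin t) + 12*e.
Proof.
  intros hk ht hkt he. pose proof PI_bounds.
  pose proof (sin2_cos2 t) as hsc. unfold Rsqr in hsc.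
  destruct (Rlt_le_dec t (PI/2)) as [ht2|ht2].
  - assert (hc0 : 0 < cos t) by (apply cos_gt_0; lra).
    pose proof (H_pos k t hk ht ht2 hkt).
    assert (hQH : k*PI*((k - sin t)^2 + e^2) - 2*PI*(k - sin t) + 12*e
       - (PI*(k^2-1)*(k-2*sin t) + 12*cos t) = (e - cos t)*(k*PI*(e+cos t) + 12)).
    { assert (E : forall X, X = 0 -> X + (PI*(k^2-1)*(k-2*sin t) + 12*cos t) + (e - cos t)*(k*PI*(e+cos t) + 12) = k*PI*((k - sin t)^2 + e^2) - 2*PI*(k - sin t) + 12*e -> True) by auto.
      assert (PI*k*(sin t * sin t + cos t * cos t - 1) = 0) by (rewrite hsc; ring).
      assert (k*PI*((k - sin t)^2 + e^2) - 2*PI*(k - sin t) + 12*e - (PI*(k^2-1)*(k-2*sin t) + 12*cos t) - (e - cos t)*(k*PI*(e+cos t) + 12) = PI*k*(sin t * sin t + cos t * cos t - 1)) by ring.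
      lra. }
    assert (0 <= (e - cos t)*(k*PI*(e+cos t) + 12)).
    { apply Rmult_le_pos; [lra|]. assert (0 <= k*PI*(e+cos t)) by (apply Rmult_le_pos; nra). lra. }
    lra.
  - set (w := t - PI/2).
    assert (hw : 0 <= w) by (unfold w; lra).
    assert (hc : cos t = - sin w).
    { unfold w. rewrite <- sin_shift. replace (PI/2 - t) with (- (t - PI/2)) by ring. apply sin_neg. }
    pose proof (sin_ub_poly w hw).
    assert (hs1 : sin t <= 1) by (pose proof (SIN_bound t); lra).
    assert (hkw : PI*k > 2*PI + 4*w) by (unfold w in *; lra).
    assert (hk2 : k > 2) by nra.
    set (p := k - sin t).
    assert (hp : p >= k - 1) by (unfold p; lra).
    assert (hQ1 : k*PI*(p^2 + e^2) - 2*PI*p + 12*e >= k*PI*p^2 - 2*PI*p + 12*cos t).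
    { assert (0 <= k*PI*e^2) by (apply Rmult_le_pos; nra).
      assert (k*PI*(p^2+e^2) = k*PI*p^2 + k*PI*e^2) by ring. lra. }
    assert (hf : p*(k*p-2) - (k-1)*(k*(k-1)-2) = (p-(k-1))*(k*(p+(k-1))-2)) by ring.
    assert (0 <= (p-(k-1))*(k*(p+(k-1))-2)) by (apply Rmult_le_pos; nra).
    assert ((k-1)*(k*(k-1)-2) - 3*(k-2) = (k-2)*((k-2)*(k+2))) by ring.
    assert (0 <= (k-2)*((k-2)*(k+2))) by (apply Rmult_le_pos; nra).
    assert (hpk : p*(k*p-2) >= 3*(k-2)) by lra.
    assert (k*PI*p^2 - 2*PI*p = PI*(p*(k*p-2))) by ring.
    assert (PI*(p*(k*p-2)) >= PI*(3*(k-2))) by (apply Rmult_ge_compat_l; lra).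
    lra.
Qed.

Lemma key k t g e : 0 < k -> 0 <= t -> 4*t < PI*k -> cos t <= e -> 0 < g -> g*k <= 2 ->
  0 < k - sin t /\ 0 < PI*((k - sin t)^2 + e^2) - g*(PI*(k - sin t) - 6*e).
Proof.
  intros hk ht hkt he hg hgk. pose proof PI_bounds.
  pose proof (Q_pos k t e hk ht hkt he) as hQ.
  assert (hp : 0 < k - sin t).
  { pose proof (sin_ub_poly t ht). nra. }
  split; [exact hp|].
  set (p := k - sin t) in *.
  destruct (Rle_lt_dec (PI*p - 6*e) 0) as [hL|hL].
  - assert (0 <= - g*(PI*p - 6*e)) by nra. assert (0 < PI*(p^2+e^2)) by nra. nra.
  - assert (g*k*(PI*p - 6*e) <= 2*(PI*p - 6*e)) by nra.
    assert (0 < k*(PI*(p^2+e^2) - g*(PI*p - 6*e))) by nra.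
    nra.
Qed.

Theorem lemma7 (m r gamma : R) (hm : 0 <= m) (hr : 0 < r) (hg : 0 < gamma)
  (hrm : r <= sqrt (2 / (gamma * m))) :
  forall tau d w : R, 0 <= tau -> tau < PI * m * r / 4 -> 0 <= d -> 0 < w ->
    denom m d r tau w <> (0, 0) /\ Re (expr7 m d r gamma tau w) > 0.
Proof.
  intros tau d w ht0 htm hd hw. pose proof PI_bounds.
  assert (hm0 : 0 < m).
  { destruct hm as [hm|hm]; [exact hm|]. subst m. exfalso.
    rewrite Rmult_0_r in hrm. unfold Rdiv in hrm. rewrite Rinv_0, Rmult_0_r, sqrt_0 in hrm. lra. }
  assert (hr2 : gamma*m*r^2 <= 2).
  { assert (0 < gamma*m) by nra.
    assert (r^2 <= 2/(gamma*m)).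
    { rewrite <- (sqrt_sqrt (2/(gamma*m))) by (apply Rlt_le, Rdiv_lt_0_compat; lra). nra. }
    apply (Rmult_le_compat_l (gamma*m)) in H1; [|lra].
    field_simplify in H1; lra. }
  set (k := m*w*r). set (t := w*tau). set (g := gamma*r/w).
  set (e := r*d + cos t).
  assert (hk : 0 < k) by (unfold k; apply Rmult_lt_0_compat; nra).
  assert (ht : 0 <= t) by (unfold t; nra).
  assert (hkt : 4*t < PI*k) by (unfold t, k; nra).
  assert (he : cos t <= e) by (unfold e; nra).
  assert (hgp : 0 < g) by (unfold g; apply Rdiv_lt_0_compat; nra).
  assert (hgk : g*k <= 2) by (unfold g, k; field_simplify; lra).
  destruct (key k t g e hk ht hkt he hgp hgk) as [hp hpos].
  set (p := k - sin t) in *.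
  set (q := w/r).
  assert (hq : 0 < q) by (unfold q; apply Rdiv_lt_0_compat; lra).
  assert (hD : denom m d r tau w = (-(q*p), q*e)).
  { unfold denom, Cmul, Cadd, RtoC, Cj, Cexpj, q, p, e, k, t; simpl.
    rewrite cos_neg, sin_neg. f_equal; field; lra. }
  assert (hqp : 0 < q*p) by (apply Rmult_lt_0_compat; lra).
  assert (hN : 0 < (q*p)^2 + (q*e)^2) by nra.
  split.
  - rewrite hD. intro Hc. injection Hc as H1 H2. nra.
  - assert (hRe : Re (expr7 m d r gamma tau w) =
        PI + (PI*gamma*(-(q*p)) + 6*gamma*(q*e)) / ((-(q*p))^2 + (q*e)^2)).
    { unfold expr7, Cdiv, Cinv, Cmul, Cadd, RtoC. rewrite hD. unfold Re; simpl.
      field. nra. }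
    rewrite hRe.
    assert (hid : PI + (PI*gamma*(-(q*p)) + 6*gamma*(q*e)) / ((-(q*p))^2 + (q*e)^2)
       = q^2 * (PI*(p^2+e^2) - g*(PI*p - 6*e)) / ((q*p)^2 + (q*e)^2)).
    { unfold g, q. field. assert (0 < w*p) by (apply Rmult_lt_0_compat; lra). split; [lra|split; [lra|]]. nra. }
    rewrite hid. apply Rlt_gt. apply Rdiv_lt_0_compat; [|exact hN].
    apply Rmult_lt_0_compat; [nra|exact hpos].
Qed.
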